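(* Let $a<b$ and let $f:[a,b]\to\mathbb{R}$ be continuous. Then there exists $\eta\in(a,b)$ such that $$f(\eta)=\frac{1}{\eta-a}\int_a^\eta f(t)\,\mathrm{d}t+\frac{\eta-a}{2}\cdot\frac{f(b)-f(a)}{b-a}.$$ *)

(* Defs.v *)
From Stdlib Require Import Reals.
From Coquelicot Require Import Coquelicot.
Open Scope R_scope.

Definition continuous_on_closed (f : R -> R) (a b : R) : Prop :=
  forall x, a <= x <= b ->
    filterlim f (within (fun y => a <= y <= b) (locally x)) (locally (f x)).

(* Main.v *)
Require Import Defs.
From Stdlib Require Import Reals Lra Classical.
From Coquelicot Require Import Coquelicot.
Open Scope R_scope.

Lemma ball_R (x e y : R) : ball x e y -> Rabs (y - x) < e.
Proof. intro H. exact H. Qed.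

Lemma cont_pt (h : R -> R) x : continuous h x -> continuity_pt h x.
Proof. intro H; now apply continuity_pt_filterlim. Qed.

Section K.
Variables (w dw : R -> R) (a b : R).
Hypothesis hab : a < b.
Hypothesis hd : forall x, is_derive w x (dw x).
Hypothesis hc : forall x, continuous dw x.
Hypothesis w0 : w a = 0.
Hypothesis dwa : dw a = 0.
Hypothesis dwb : dw b = 0.

Let psi x := dw x * (x - a) - w x.

Lemma psi_cont : continuity psi.
Proof.
  intro x. apply cont_pt. unfold psi.
  apply (continuous_minus (fun x => dw x * (x - a)) w).
  - apply (continuous_mult dw (fun x => x - a)). apply hc.
    apply (continuous_minus (fun x => x) (fun _ => a)).
    apply continuous_id. apply continuous_const.
  - apply ex_derive_continuous. exists (dw x). apply hd.
Qed.

Lemma key_pos : (forall x, a < x < b -> psi x > 0) -> False.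
Proof.
  intro Hpos.
  set (x0 := (a+b)/2).
  assert (Hx0 : a < x0 < b) by (unfold x0; lra).
  assert (Hwb : w b <= 0).
  { destruct (Rle_or_lt (w b) 0) as [H|H]; [exact H|exfalso].
    assert (Hpb : psi b < 0) by (unfold psi; rewrite dwb; lra).
    destruct (IVT (fun x => - psi x) x0 b) as [z [Hz1 Hz2]].
    - apply (continuity_opp psi). apply psi_cont.
    - lra.
    - specialize (Hpos x0 Hx0). lra.
    - lra.
    - assert (z <> b) by (intro; subst; lra).
      assert (psi z > 0) by (apply Hpos; lra). lra. }
  set (m x := w x * / (x - a)).
  assert (Hm : forall x y, a < x < y -> y <= b -> m x < m y).
  { intros x y Hxy Hy.
    destruct (MVT_cor2 m (fun t => psi t / (t - a)^2) x y) as [c [Hc1 Hc2]].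
    - lra.
    - intros c Hc. apply is_derive_Reals.
      assert (Hca : c - a <> 0) by lra.
      assert (Hi : is_derive (fun t => / (t - a)) c (- (minus 1 0) / (c - a)^2)).
      { auto_derive. exact Hca. unfold minus, plus, opp; simpl. field. exact Hca. }
      assert (H := is_derive_mult w (fun t => / (t - a)) c _ _ (hd c) Hi ltac:(intros; apply Rmult_comm)).
      match type of H with is_derive _ _ ?v => replace (psi c / (c - a) ^ 2) with v end.
      exact H.
      unfold psi, plus, mult, minus, opp, plus; simpl.
      unfold zero; simpl. field. exact Hca.
    - assert (psi c > 0) by (apply Hpos; lra).
      assert (psi c / (c - a) ^ 2 > 0).
      { apply Rdiv_lt_0_compat. lra. apply pow_lt. lra. }
      assert (psi c / (c - a) ^ 2 * (y - x) > 0) by (apply Rmult_lt_0_compat; lra).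
      lra. }
  assert (Hmb : m b <= 0).
  { unfold m. assert (/ (b - a) > 0) by (apply Rinv_0_lt_compat; lra). nra. }
  assert (Hmx0 : m x0 < m b) by (apply Hm; lra).
  set (d := - m x0).
  assert (Hd : 0 < d) by (unfold d; lra).
  destruct (proj1 (filterlim_locally dw (dw a)) (hc a) (mkposreal d Hd)) as [eps Heps].
  set (x := a + Rmin eps (x0 - a) / 2).
  assert (Hmin1 : Rmin eps (x0 - a) <= eps) by apply Rmin_l.
  assert (Hmin2 : Rmin eps (x0 - a) <= x0 - a) by apply Rmin_r.
  assert (Hmin3 : 0 < Rmin eps (x0 - a)) by (apply Rmin_glb_lt; [apply cond_pos|lra]).
  assert (Hx : a < x < x0) by (unfold x; lra).
  destruct (MVT_cor2 w dw a x) as [c [Hc1 Hc2]]; [lra| intros; apply is_derive_Reals, hd |].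
  assert (Hmx : m x < m x0) by (apply Hm; lra).
  assert (Hball : ball a eps c).
  { change (Rabs (c - a) < eps). rewrite Rabs_right by lra. unfold x in Hc2. lra. }
  specialize (Heps c Hball). apply ball_R in Heps. simpl in Heps.
  rewrite dwa in Heps.
  assert (Hdc : dw c = m x).
  { unfold m. replace (w x) with (dw c * (x - a)) by lra. field. lra. }
  unfold d in Heps. rewrite Hdc in Heps.
  assert (Rabs (m x - 0) >= - (m x)) by (rewrite Rminus_0_r; rewrite <- Rabs_Ropp; apply Rle_ge, RRle_abs).
  lra.
Qed.
End K.

Lemma key (w dw : R -> R) (a b : R) : a < b ->
  (forall x, is_derive w x (dw x)) -> (forall x, continuous dw x) ->
  w a = 0 -> dw a = 0 -> dw b = 0 ->
  exists eta, a < eta < b /\ dw eta * (eta - a) = w eta.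
Proof.
  intros hab hd hc w0 dwa dwb.
  apply NNPP; intro Hn.
  assert (Hne : forall x, a < x < b -> dw x * (x - a) - w x <> 0).
  { intros x Hx He. apply Hn. exists x. split; [exact Hx|lra]. }
  set (x0 := (a+b)/2). assert (Hx0 : a < x0 < b) by (unfold x0; lra).
  assert (HC := psi_cont w dw a hd hc).
  assert (HCn : continuity (fun x => - (dw x * (x - a) - w x))) by (apply continuity_opp; exact HC).
  assert (Hsign : forall p : R -> R, continuity p -> (forall x, a < x < b -> p x <> 0) ->
     p x0 > 0 -> forall x, a < x < b -> p x > 0).
  { intros p Hp Hpn Hp0 x Hx. destruct (Rlt_or_le 0 (p x)) as [H|H]; [exact H|].
    assert (p x < 0) by (specialize (Hpn x Hx); lra).
    destruct (Rlt_or_le x x0) as [Hl|Hl].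
    - destruct (IVT p x x0 Hp Hl) as [z [Hz1 Hz2]]; try lra.
      exfalso. apply (Hpn z); [lra|exact Hz2].
    - destruct (Rle_lt_or_eq_dec _ _ Hl) as [Hl'|Hl']; [|subst; lra].
      destruct (IVT (fun t => - p t) x0 x) as [z [Hz1 Hz2]]; try lra.
      apply continuity_opp; exact Hp.
      exfalso. apply (Hpn z); [lra|lra]. }
  destruct (Rlt_or_le 0 (dw x0 * (x0 - a) - w x0)) as [Hp|Hp].
  - apply (key_pos w dw a b hab hd hc w0 dwa dwb).
    apply (Hsign _ HC Hne Hp).
  - assert (Hq : dw x0 * (x0 - a) - w x0 < 0) by (specialize (Hne x0 Hx0); lra).
    apply (key_pos (fun x => - w x) (fun x => - dw x) a b hab).
    + intro x. apply (is_derive_opp w x (dw x)), hd.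
    + intro x. apply (continuous_opp dw), hc.
    + rewrite w0; lra.
    + rewrite dwa; lra.
    + rewrite dwb; lra.
    + intros x Hx. 
      assert (H := Hsign _ HCn ltac:(intros y Hy; specialize (Hne y Hy); lra) ltac:(lra) x Hx).
      simpl in H. lra.
Qed.

Theorem mainTheorem5 (a b : R) (f : R -> R)
  (hab : a < b) (hf : continuous_on_closed f a b) :
  exists eta, a < eta < b /\
    f eta = / (eta - a) * RInt f a eta
            + (eta - a) / 2 * ((f b - f a) / (b - a)).
Proof.
  set (cl := fun x => Rmax a (Rmin x b)).
  assert (Hcl : forall x, a <= cl x <= b).
  { intro x; unfold cl, Rmax, Rmin; repeat destruct Rle_dec; lra. }
  assert (Hcli : forall x, a <= x <= b -> cl x = x).
  { intros x Hx; unfold cl, Rmax, Rmin; repeat destruct Rle_dec; lra. }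
  assert (Hlip : forall x y, Rabs (cl y - cl x) <= Rabs (y - x)).
  { intros x y; unfold cl, Rmax, Rmin; repeat destruct Rle_dec;
    unfold Rabs; repeat destruct Rcase_abs; lra. }
  set (g := fun x => f (cl x)).
  assert (Hg : forall x, continuous g x).
  { intro x. unfold g.
    apply (filterlim_comp _ _ _ cl f (locally x) (within (fun y => a <= y <= b) (locally (cl x)))).
    - intros P HP. unfold within in HP. destruct HP as [eps Heps].
      exists eps. intros y Hy. apply Heps; [|apply Hcl].
      change (Rabs (cl y - cl x) < eps). eapply Rle_lt_trans; [apply Hlip|exact Hy].
    - apply hf, Hcl. }
  set (k := (f b - f a) / (b - a)).
  set (w := fun x => RInt g a x - k * (x - a)^2 / 2 - f a * (x - a)).
  set (dw := fun x => g x - k * (x - a) - f a).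
  assert (HI : forall y, ex_RInt g a y).
  { intro y. apply (@ex_RInt_continuous R_CompleteNormedModule). intros; apply Hg. }
  assert (HdF : forall x, is_derive (fun y => RInt g a y) x (g x)).
  { intro x. apply (is_derive_RInt g (fun y => RInt g a y) a x). 2: apply Hg.
    apply filter_forall. intro y. apply (@RInt_correct R_CompleteNormedModule), HI. }
  assert (hd : forall x, is_derive w x (dw x)).
  { intro x. unfold w, dw.
    assert (H1 : is_derive (fun y => k * (y - a)^2 / 2 + f a * (y - a)) x (k * (x - a) + f a)).
    { auto_derive. auto. field. }
    assert (H := is_derive_minus _ _ x _ _ (HdF x) H1).
    match type of H with is_derive _ _ ?v => replace (g x - k * (x - a) - f a) with v end.
    eapply is_derive_ext; [|exact H]. intro t. simpl. unfold minus, plus, opp; simpl. ring.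
    unfold minus, plus, opp; simpl. ring. }
  assert (hc : forall x, continuous dw x).
  { intro x. unfold dw.
    apply (continuous_minus (fun x => g x - k * (x - a)) (fun _ => f a)).
    2: apply continuous_const.
    apply (continuous_minus g (fun x => k * (x - a))). apply Hg.
    apply (continuous_mult (fun _ => k) (fun x => x - a)). apply continuous_const.
    apply (continuous_minus (fun x => x) (fun _ => a)).
    apply continuous_id. apply continuous_const. }
  assert (ga : g a = f a) by (unfold g; rewrite Hcli; lra).
  assert (gb : g b = f b) by (unfold g; rewrite Hcli; lra).
  destruct (key w dw a b hab hd hc) as [eta [He1 He2]].
  - unfold w. rewrite RInt_point. unfold zero; simpl. field.
  - unfold dw. rewrite ga. ring.
  - unfold dw. rewrite gb. unfold k. field. lra.
  - exists eta. split; [exact He1|].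
    assert (HR : RInt g a eta = RInt f a eta).
    { apply RInt_ext. intros x Hx. unfold g. rewrite Hcli; [reflexivity|].
      rewrite Rmin_left in Hx by lra. rewrite Rmax_right in Hx by lra. lra. }
    unfold w, dw in He2. rewrite HR in He2.
    unfold g in He2. rewrite Hcli in He2 by lra. fold k.
    apply Rmult_eq_reg_r with (eta - a); [|lra].
    assert (E : f eta * (eta - a) = RInt f a eta + k * (eta - a)^2 / 2) by nra.
    rewrite E. field. lra.
Qed.
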